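(* Let $(X,P)$ be an $(N,s)$-pre-tiling space, let $Y$ be a metric space, and let $f:X\to Y$ be a surjective $(L,\gamma)$-homogeneously bi-Hölder map. Define the covering structure $Q$ on $Y$ by $\mathrm{dom}(Q)=\mathrm{dom}(P)$ and $Q_n=\{f(A):A\in P_n\}$. Then $(Y,Q)$ is an $(N,s^\gamma)$-pre-tiling space.
   Context: For $L\ge1$, $\gamma>0$, a map $f:X\to Y$ is $(L,\gamma)$-homogeneously bi-Hölder if $L^{-1}d_X(x,y)^\gamma\le d_Y(f(x),f(y))\le Ld_X(x,y)^\gamma$ for all $x,y\in X$. $\mathbb{N}=\{0,1,\dots\}$. A covering structure on a set $Z$ is a map $P$ from $\mathbb{N}$ or $\mathbb{Z}$ to coverings of $Z$; $P_n$ its value, $\mathrm{dom}(P)$ its domain; $[T]_k=\{A\in P_{n+k}:A\subset T\}$ for $T\in P_n$. $(Z,P)$ is an $N$-tiling set if (S1) for $n<m$ in $\mathrm{dom}(P)$, $A\in P_n$: $\mathrm{card}[A]_{m-n}=N^{m-n}$ and $A=\bigcup[A]_{m-n}$; (S2) for $A,B\in P_n$ there exist $m$ and $C\in P_m$ with $A\cup B\subset C$. For $Z$ a metric space ($\delta$ = diameter, $U(p,r)$ open ball), $s\in(0,\infty)$, an $N$-tiling set is an $(N,s)$-pre-tiling space if (T1) there are $D_1,D_2>0$ with $D_1\le\delta(A)/s^n\le D_2$ for all $n\in\mathrm{dom}(P)$, $A\in P_n$; (T2) there is $E>0$ such that every $A\in P_n$ contains some $p_A$ with $U(p_A,Es^n)\subset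 A$. *)

(* Defs.v *)
From HB Require Import structures.
From mathcomp Require Import all_boot all_order all_algebra.
From mathcomp Require Import all_classical all_reals all_analysis.
Set Implicit Arguments. Unset Strict Implicit. Unset Printing Implicit Defensive.
Import Order.TTheory GRing.Theory Num.Theory.
Local Open Scope classical_set_scope.
Local Open Scope ring_scope.

Section Tiling.
Variable R : realType.

Definition is_metric (T : Type) (d : T -> T -> R) : Prop :=
  (forall x y, 0 <= d x y) /\ (forall x y, d x y = 0 <-> x = y) /\
  (forall x y, d x y = d y x) /\ (forall x y z, d x z <= d x y + d y z).

Definition homog_biHolder (X Y : Type) (dX : X -> X -> R) (dY : Y -> Y -> R)
  (L gamma : R) (f : X -> Y) : Prop :=
  forall x y, L^-1 * (dX x y `^ gamma) <= dY (f x) (f y) /\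
              dY (f x) (f y) <= L * (dX x y `^ gamma).

(* Domain of a covering structure: N (isZ = false) or Z (isZ = true). *)
Definition indom (isZ : bool) (n : int) : Prop := isZ \/ (0 <= n).

Definition covering_structure (Z : Type) (isZ : bool) (P : int -> set (set Z)) :=
  forall n, indom isZ n -> \bigcup_(A in P n) A = [set: Z].

Definition subtiles (Z : Type) (P : int -> set (set Z)) (n : int) (k : nat) (T : set Z) :=
  [set A | P (n + k%:Z) A /\ A `<=` T].

Definition tiling_set (Z : Type) (isZ : bool) (P : int -> set (set Z)) (N : nat) :=
  covering_structure isZ P /\
  (forall (n m : int), indom isZ n -> indom isZ m -> n < m ->
     forall A, P n A ->
       ((subtiles P n `|m - n|%N A) #= `I_(N ^ `|m - n|%N))%card /\
       A = \bigcup_(B in subtiles P n `|m - n|%N A) B) /\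
  (forall n, indom isZ n -> forall A B, P n A -> P n B ->
     exists m, indom isZ m /\ exists C, P m C /\ A `|` B `<=` C).

Definition diam (Z : Type) (d : Z -> Z -> R) (A : set Z) : \bar R :=
  ereal_sup [set (d x y)%:E | x in A & y in A].

Definition oball (Z : Type) (d : Z -> Z -> R) (p : Z) (r : R) : set Z :=
  [set y | d p y < r].

(* (T1) written as D1 * s^n <= diam A <= D2 * s^n, equivalent to
   D1 <= diam A / s^n <= D2 since s^n > 0 (and forces diam A finite). *)
Definition pre_tiling_space (Z : Type) (d : Z -> Z -> R) (isZ : bool)
  (P : int -> set (set Z)) (N : nat) (s : R) : Prop :=
  is_metric d /\ 0 < s /\ tiling_set isZ P N /\
  (exists D1 D2 : R, 0 < D1 /\ 0 < D2 /\
     forall n, indom isZ n -> forall A, P n A ->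
       ((D1 * s ^ n)%:E <= diam d A /\ diam d A <= (D2 * s ^ n)%:E)%E) /\
  (exists E : R, 0 < E /\
     forall n, indom isZ n -> forall A, P n A ->
       exists2 p, A p & oball d p (E * s ^ n) `<=` A).

End Tiling.

(* Main.v *)
Require Import Defs.
From mathcomp Require Import all_boot all_order all_algebra.
From mathcomp Require Import all_classical all_reals all_analysis.
Import Order.TTheory GRing.Theory Num.Theory.
Local Open Scope classical_set_scope.
Local Open Scope ring_scope.

Set Implicit Arguments. Unset Strict Implicit.
Section Helpers.
Variable R : realType.

Lemma diam_ub (Z : Type) (d : Z -> Z -> R) (A : set Z) x y :
  A x -> A y -> ((d x y)%:E <= diam d A)%E.
Proof. by move=> Ax Ay; apply: ereal_sup_ubound; exists x => //; exists y. Qed.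

Lemma diam_le (Z : Type) (d : Z -> Z -> R) (A : set Z) (M : R) :
  (forall x y, A x -> A y -> d x y <= M) -> (diam d A <= M%:E)%E.
Proof.
move=> h; apply: ge_ereal_sup => _ [x Ax [y Ay <-]]; rewrite lee_fin; exact: h.
Qed.

Lemma diam_gt (Z : Type) (d : Z -> Z -> R) (A : set Z) (M : R) :
  (M%:E < diam d A)%E -> exists x y, A x /\ A y /\ M < d x y.
Proof.
by move=> /ereal_sup_gt [_ [x Ax [y Ay <-]]]; rewrite lte_fin => h; exists x, y.
Qed.

Lemma pw (s g : R) (n : int) : 0 < s -> (s `^ g) ^ n = (s ^ n) `^ g.
Proof.
move=> s0.
rewrite -powR_intmul ?powR_ge0 // -powRrM mulrC powRrM powR_intmul //.
exact: ltW.
Qed.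

End Helpers.

Theorem proposition3p11 (R : realType) (X Y : Type)
  (dX : X -> X -> R) (dY : Y -> Y -> R) (isZ : bool)
  (P : int -> set (set X)) (N : nat) (s L gamma : R) (f : X -> Y) :
  pre_tiling_space dX isZ P N s ->
  is_metric dY ->
  1 <= L -> 0 < gamma ->
  homog_biHolder dX dY L gamma f ->
  (forall y : Y, exists x : X, f x = y) ->
  pre_tiling_space dY isZ (fun n => [set f @` A | A in P n]) N (s `^ gamma).
Proof.
move=> [mX [s0 [[covP [S1 S2]] [[D1 [D2 [D10 [D20 T1]]]] [E [E0 T2]]]]]] mY L1 g0 hf surj.
have L0 : 0 < L by apply: lt_le_trans L1.
have Li0 : 0 < L^-1 by rewrite invr_gt0.
have dX0 : forall x y, 0 <= dX x y by case: mX.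
have finj : injective f.
  move=> x y fxy; have [h _] := hf x y; rewrite fxy in h.
  have e0 : dY (f y) (f y) = 0 by case: mY => _ [h2 _]; apply/h2.
  rewrite e0 in h.
  have h1 : dX x y `^ gamma <= 0 by rewrite -(pmulr_rle0 _ Li0).
  have h3 : dX x y `^ gamma = 0 by apply/le_anti; rewrite h1 powR_ge0.
  by case: mX => _ [h2 _]; apply/h2; apply: powR_eq0_eq0 h3.
split; first exact: mY.
split; first exact: powR_gt0.
split.
  split.
    move=> n hn; apply/seteqP; split=> // y _.
    have [x <-] := surj y.
    have : (\bigcup_(A in P n) A) x by rewrite covP.
    case=> A PA Ax; exists (f @` A); [by exists A | by exists x].
  split.
    move=> n m hn hm nm C [A PA <-].
    have [hc hu] := S1 n m hn hm nm A PA.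
    set k := `|m - n|%N in hc hu *.
    have eqs : subtiles (fun n => [set f @` A | A in P n]) n k (f @` A) =
               (fun B => f @` B) @` subtiles P n k A.
      rewrite /subtiles; apply/seteqP; split => C' /=.
        case=> [[B PB <-] sub]; exists B => //; split => // x Bx.
        have : (f @` A) (f x) by apply: sub; exists x.
        by case => x' Ax' /finj <-.
      case=> B [PB BA] <-; split; first by exists B.
      by move=> y [x Bx <-]; exists x => //; exact: BA.
    split.
      rewrite eqs (card_eql (inj_card_eq _)) //.
      apply: in2W => B C' /= e; apply/seteqP; split => x Bx.
        have : (f @` C') (f x) by rewrite -e; exists x.
        by case=> x' Cx' /finj <-.
      have : (f @` B) (f x) by rewrite e; exists x.
      by case=> x' Cx' /finj <-.
    rewrite eqs; apply/seteqP; split.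
      move=> y [x Ax <-]; rewrite hu in Ax; case: Ax => B sB Bx.
      by exists (f @` B); [exists B | exists x].
    move=> y [C' [B sB <-] [x Bx <-]]; exists x => //.
    by case: sB => _ BA; exact: BA.
  move=> n hn C1 C2 [A PA <-] [B PB <-].
  have [m [hm [C [PC sub]]]] := S2 n hn A B PA PB.
  exists m; split => //; exists (f @` C); split; first by exists C.
  move=> y [] [x Hx <-]; exists x => //; apply: sub; [left|right] => //.
split.
  exists (L^-1 * (D1 / 2) `^ gamma), (L * D2 `^ gamma).
  split; first by rewrite mulr_gt0 // powR_gt0 // divr_gt0.
  split; first by rewrite mulr_gt0 // powR_gt0.
  move=> n hn C [A PA <-]; have [lo hi] := T1 n hn A PA.
  have sn0 : 0 < s ^ n by rewrite exprz_gt0.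
  rewrite pw //; split.
    have : ((D1 / 2 * s ^ n)%:E < diam dX A)%E.
      apply: lt_le_trans _ lo; rewrite lte_fin ltr_pM2r // ltr_pdivrMr //.
      by rewrite ltr_pMr // ltr1n.
    case/diam_gt => x [y [Ax [Ay hxy]]].
    apply: le_trans _ (diam_ub _ (imageP f Ax) (imageP f Ay)).
    rewrite lee_fin; apply: le_trans _ (proj1 (hf x y)).
    rewrite -mulrA ler_pM2l // -powRM ?(ltW sn0) ?divr_ge0 ?(ltW D10) //.
    apply: ge0_ler_powR; rewrite ?nnegrE ?(ltW g0) ?dX0 ?ltW //.
    by rewrite mulr_gt0 ?divr_gt0.
  apply: diam_le => _ _ [x Ax <-] [y Ay <-].
  apply: le_trans (proj2 (hf x y)) _.
  rewrite -mulrA ler_pM2l // -powRM ?(ltW sn0) ?(ltW D20) //.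
  apply: ge0_ler_powR; rewrite ?nnegrE ?(ltW g0) ?dX0 //.
    by rewrite mulr_ge0 ?(ltW sn0) ?(ltW D20).
  by rewrite -lee_fin; apply: le_trans _ hi; apply: diam_ub.
exists (L^-1 * E `^ gamma); split; first by rewrite mulr_gt0 // powR_gt0.
move=> n hn C [A PA <-]; have [p Ap sub] := T2 n hn A PA.
have sn0 : 0 < s ^ n by rewrite exprz_gt0.
exists (f p); first by exists p.
move=> y; rewrite /oball /= pw // => hy.
have [x ex] := surj y; subst y.
exists x => //; apply: sub; rewrite /oball /=.
rewrite ltNge; apply/negP => hle.
have := le_lt_trans (proj1 (hf p x)) hy.
rewrite -mulrA ltr_pM2l // -powRM ?(ltW sn0) ?(ltW E0) // => h.
have := ge0_ler_powR (ltW g0) _ _ hle.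
rewrite !nnegrE dX0 mulr_ge0 ?(ltW sn0) ?(ltW E0) // => /(_ isT isT) h2.
by have := lt_le_trans h h2; rewrite ltxx.
Qed.
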